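(* Let $\Sigma^2=\{0,1\}^{\mathbb{N}}$ with the metric $d(x,y)=0$ if $x=y$ and $d(x,y)=\frac1k$ if $x\neq y$, where $k=\min\{n\ge 0\mid x_n\ne y_n\}+1$, and let $\sigma:\Sigma^2\to\Sigma^2$ be the shift $\sigma(x_0x_1x_2\cdots)=x_1x_2\cdots$. Let $X\subset\Sigma^2$ be a nonempty set with $\sigma(X)\subset X$, equipped with the restricted metric. If $\sigma|_X$ is accessible, then $\sigma^2|_X$ is accessible.
   Context: A continuous map $f$ of a metric space $(X,d)$ into itself is accessible if for every $\epsilon>0$ and all nonempty open sets $U,V\subset X$ there exist $x\in U$, $y\in V$ and $n\in\mathbb{Z}^+=\{1,2,\dots\}$ with $d(f^n(x),f^n(y))<\epsilon$. Here $\mathbb{N}=\{0,1,2,\dots\}$ and open sets are open in $X$. *)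

(* Defs.v *)
From Stdlib Require Import Reals Lra Lia Classical ClassicalEpsilon.
Open Scope R_scope.

Definition Sigma2 := nat -> bool.

(* k - 1 = least index where x and y differ (only meaningful when x <> y). *)
Definition firstdiff (x y : Sigma2) : nat :=
  epsilon (inhabits 0%nat)
    (fun n => x n <> y n /\ forall m, (m < n)%nat -> x m = y m).

Definition d (x y : Sigma2) : R :=
  match excluded_middle_informative (x = y) with
  | left _ => 0
  | right _ => / INR (S (firstdiff x y))
  end.

Definition shift (x : Sigma2) : Sigma2 := fun n => x (S n).

Definition open_in (X U : Sigma2 -> Prop) : Prop :=
  (forall u, U u -> X u) /\
  forall u, U u -> exists eps, eps > 0 /\
    forall z, X z -> d u z < eps -> U z.

Definition accessible_on (X : Sigma2 -> Prop) (f : Sigma2 -> Sigma2) : Prop :=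
  forall eps, eps > 0 ->
  forall U V, open_in X U -> open_in X V ->
    (exists u, U u) -> (exists v, V v) ->
    exists x y n, U x /\ V y /\ (n >= 1)%nat /\
      d (Nat.iter n f x) (Nat.iter n f y) < eps.

(* Main.v *)
Require Import Defs.
From Stdlib Require Import Reals.
From Stdlib Require Import Lra Lia Classical ClassicalEpsilon Arith FunctionalExtensionality.
Open Scope R_scope.

Lemma fd_spec (x y : Sigma2) : x <> y ->
  x (firstdiff x y) <> y (firstdiff x y) /\
  forall m, (m < firstdiff x y)%nat -> x m = y m.
Proof.
  intros Hxy. unfold firstdiff. apply epsilon_spec.
  assert (Hex : exists n, x n <> y n).
  { apply not_all_ex_not. intros H. apply Hxy. extensionality n. exact (H n). }
  destruct (Wf_nat.dec_inh_nat_subset_has_unique_least_element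
              (fun n => x n <> y n)) as [n [[Hn Hmin] _]].
  - intros n. apply classic.
  - exact Hex.
  - exists n. split; [exact Hn|].
    intros m Hm. destruct (classic (x m = y m)) as [E|E]; [exact E|].
    specialize (Hmin m E). lia.
Qed.

Lemma dA (K : nat) (x y : Sigma2) :
  (forall m, (m < K)%nat -> x m = y m) -> d x y <= / INR (S K).
Proof.
  intros H. unfold d. destruct (excluded_middle_informative (x = y)).
  - left. apply Rinv_0_lt_compat. apply lt_0_INR. lia.
  - destruct (fd_spec x y n) as [H1 H2].
    assert (K <= firstdiff x y)%nat.
    { destruct (Nat.le_gt_cases K (firstdiff x y)); auto.
      exfalso; apply H1; apply H; auto. }
    apply Rinv_le_contravar. apply lt_0_INR. lia. apply le_INR. lia.
Qed.

Lemma dB (K : nat) (x y : Sigma2) :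
  d x y < / INR (S K) -> forall m, (m <= K)%nat -> x m = y m.
Proof.
  intros H m Hm. unfold d in H. destruct (excluded_middle_informative (x = y)).
  - subst; reflexivity.
  - destruct (fd_spec x y n) as [H1 H2]. apply H2.
    destruct (Nat.le_gt_cases (firstdiff x y) K) as [L|L]; [|lia].
    exfalso.
    assert (/ INR (S K) <= / INR (S (firstdiff x y))).
    { apply Rinv_le_contravar. apply lt_0_INR. lia. apply le_INR. lia. }
    lra.
Qed.

Lemma iter2 (m : nat) (x : Sigma2) :
  Nat.iter m (fun x => shift (shift x)) x = Nat.iter (2 * m) shift x.
Proof.
  induction m.
  - reflexivity.
  - replace (2 * S m)%nat with (S (S (2 * m))) by lia.
    simpl Nat.iter. rewrite IHm. reflexivity.
Qed.

Theorem lemma3p5 (X : Sigma2 -> Prop) :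
  (exists x, X x) ->
  (forall x, X x -> X (shift x)) ->
  accessible_on X shift ->
  accessible_on X (fun x => shift (shift x)).
Proof.
  intros _ _ Hacc eps Heps U V HU HV HUn HVn.
  destruct (archimed_cor1 eps Heps) as [N [HN HN0]].
  assert (HK : / INR (S N) < eps).
  { apply Rle_lt_trans with (/ INR N); auto.
    apply Rinv_le_contravar. apply lt_0_INR. lia. apply le_INR. lia. }
  assert (Hp : / INR (S N) > 0).
  { apply Rinv_0_lt_compat. apply lt_0_INR. lia. }
  destruct (Hacc _ Hp U V HU HV HUn HVn) as [x [y [n [Ux [Vy [Hn Hd]]]]]].
  destruct (Nat.Even_or_Odd n) as [[m Hm]|[m Hm]].
  - exists x, y, m. split; [exact Ux|]. split; [exact Vy|]. split; [lia|].
    rewrite !iter2, <- Hm. lra.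
  - exists x, y, (S m). split; [exact Ux|]. split; [exact Vy|]. split; [lia|].
    rewrite !iter2. replace (2 * S m)%nat with (S n) by lia.
    simpl Nat.iter. apply Rle_lt_trans with (/ INR (S N)); [|exact HK].
    apply dA. intros k Hk. unfold shift. apply (dB N); auto; lia.
Qed.
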